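(* Let $S$ be an entropy function for a finite set $X$, let $X'\subset X$, let $S'$ be the restriction of $S$ to subsets of $X'$, and let $f'$ be an EDF for $S'$. Then there exists an EDF $f$ for $S$ with $f(x)=f'(x)$ for all $x\in X'$.
   Context: An entropy function for a finite set $X$ is a function $S:2^X\to[0,\infty)$ with $S(\emptyset)=0$, $S(A)+S(B)\ge S(A\cap B)+S(A\cup B)$ and $S(A)+S(B)\ge S(A\setminus B)+S(B\setminus A)$ for all $A,B\subseteq X$. An entanglement distribution function (EDF) for $S$ is a function $f:X\to\mathbb R$ with $\big|\sum_{x\in A}f(x)\big|\le S(A)$ for all $A\subseteq X$. The restriction $S'$ of $S$ to $2^{X'}$ is an entropy function for $X'$. *)

(* Defs.v *)
From mathcomp Require Import all_boot all_order all_algebra.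
From mathcomp Require Import reals.
Set Implicit Arguments. Unset Strict Implicit. Unset Printing Implicit Defensive.
Import Order.TTheory GRing.Theory Num.Theory.
Local Open Scope ring_scope.

Definition entropy_function (R : realType) (X : finType) (S : {set X} -> R) : Prop :=
  [/\ S set0 = 0,
      (forall A, 0 <= S A),
      (forall A B, S (A :&: B) + S (A :|: B) <= S A + S B) &
      (forall A B, S (A :\: B) + S (B :\: A) <= S A + S B)].

(* EDF for the restriction of S to subsets of Y (Y = X gives an EDF for S).
   f is only relevant on Y. *)
Definition EDF_on (R : realType) (X : finType) (Y : {set X})
    (S : {set X} -> R) (f : X -> R) : Prop :=
  forall A : {set X}, A \subset Y -> `|\sum_(x in A) f x| <= S A.

Definition EDF (R : realType) (X : finType) (S : {set X} -> R) (f : X -> R) : Prop :=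
  EDF_on [set: X] S f.

(* Main.v *)
Require Import Defs.
From mathcomp Require Import all_boot all_order all_algebra.
From mathcomp Require Import reals.
From mathcomp Require Import lra.
Import Order.TTheory GRing.Theory Num.Theory.
Local Open Scope ring_scope.

Section Ext.
Variables (R : realType) (X : finType) (S : {set X} -> R).
Hypothesis HS : entropy_function S.

Lemma key (Y : {set X}) (f : X -> R) (y : X) : EDF_on Y S f -> y \notin Y ->
  forall A B : {set X}, A \subset Y -> B \subset Y ->
  - S (y |: A) - \sum_(x in A) f x <= S (y |: B) - \sum_(x in B) f x.
Proof.
move=> Hf yY A B sA sB.
case: HS => _ _ _ H4.
have eq1 : (y |: B) :\: (y |: A) = B :\: A.
  apply/setP => x; rewrite !inE; case: (x =P y) => [->|] //=.
  by apply/esym/negbTE; apply: contra yY => /andP[_ /(subsetP sB)].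
have eq2 : (y |: A) :\: (y |: B) = A :\: B.
  apply/setP => x; rewrite !inE; case: (x =P y) => [->|] //=.
  by apply/esym/negbTE; apply: contra yY => /andP[_ /(subsetP sA)].
have := H4 (y |: B) (y |: A); rewrite eq1 eq2 => H.
have h1 := Hf (B :\: A) (subset_trans (subsetDl B A) sB).
have h2 := Hf (A :\: B) (subset_trans (subsetDl A B) sA).
rewrite [\sum_(x in A) _](big_setID B) [\sum_(x in B) _](big_setID A) setIC /=.
move: h1 h2; rewrite !ler_norml => /andP[h1 h1'] /andP[h2 h2'].
lra.
Qed.

Lemma step (Y : {set X}) (f : X -> R) (y : X) : EDF_on Y S f -> y \notin Y ->
  exists g : X -> R, EDF_on (y |: Y) S g /\ (forall x, x \in Y -> g x = f x).
Proof.
move=> Hf yY.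
pose L := fun A : {set X} => - S (y |: A) - \sum_(x in A) f x.
have P0 : set0 \subset Y by apply: sub0set.
case: (@arg_maxP _ _ _ set0 (fun A : {set X} => A \subset Y) L P0) => A0 sA0 maxA.
pose t := L A0.
exists (fun x => if x == y then t else f x); split; last first.
  move=> x xY /=; have nxy : x != y by apply: contraNneq yY => <-.
  by rewrite (negbTE nxy).
move=> A sA.
have Hsum : forall B : {set X}, B \subset Y -> \sum_(x in B) (if x == y then t else f x) = \sum_(x in B) f x.
  move=> B sB; apply: eq_bigr => x xB; case: eqP => [exy|//].
  by move: (subsetP sB x xB); rewrite exy (negbTE yY).
case: (boolP (y \in A)) => yA; last first.
  have sAY : A \subset Y.
    apply/subsetP => x xA; move: (subsetP sA x xA).
    case/setU1P => // exy; by move: yA; rewrite -exy xA.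
  by rewrite Hsum //; apply: Hf.
set A1 := A :\ y.
have sA1 : A1 \subset Y.
  apply/subsetP => x; rewrite !inE => /andP[nxy xA]; move: (subsetP sA x xA).
  by case/setU1P => // exy; rewrite exy eqxx in nxy.
rewrite -(setD1K yA) -/A1 big_setU1 ?setD11 // eqxx Hsum //.
have lo := maxA A1 sA1.
have hi := @key _ _ _ Hf yY _ _ sA0 sA1.
move: lo; rewrite /= => lo.
rewrite ler_norml; apply/andP; split; rewrite /t /L in lo hi *; lra.
Qed.

Lemma extend_all (n : nat) : forall (Y : {set X}) (f : X -> R), (#|~: Y| <= n)%N ->
  EDF_on Y S f -> exists g : X -> R, EDF S g /\ (forall x, x \in Y -> g x = f x).
Proof.
elim: n => [|n IH] Y f hc Hf.
  have : ~: Y = set0 by apply/eqP; rewrite -cards_eq0; move: hc; case: #|_|.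
  move=> e; have eY : Y = setT by rewrite -(setCK Y) e setC0.
  by rewrite eY in Hf; exists f.
case: (set_0Vmem (~: Y)) => [e|[y]].
  apply: (IH Y f) => //; by rewrite e cards0.
rewrite inE => yY.
have [g [Hg Hgf]] := @step _ _ _ Hf yY.
have [h [Hh Hhg]] : exists h : X -> R, EDF S h /\ (forall x, x \in y |: Y -> h x = g x).
  apply: (IH (y |: Y) g) => //.
  rewrite setCU -ltnS; apply: leq_trans hc; rewrite setIC.
  rewrite (cardsD1 y (~: Y)) inE yY /= add1n ltnS; apply: subset_leq_card.
  by rewrite setDE.
exists h; split => // x xY; rewrite Hhg ?Hgf // inE xY orbT //.
Qed.

End Ext.

Theorem theorem21 (R : realType) (X : finType) (S : {set X} -> R)
    (X' : {set X}) (f' : X -> R) :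
  entropy_function S -> EDF_on X' S f' ->
  exists f : X -> R, EDF S f /\ (forall x, x \in X' -> f x = f' x).
Proof.
move=> HS Hf; exact: (@extend_all R X S HS #|~: X'| X' f' (leqnn _) Hf).
Qed.
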